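(* Let $V$ be a finite nonempty set of voters, $A$ a finite set of alternatives, and $F:\mathcal{P}(V,A)\to S_2(A)$ a consular election rule satisfying SPP and SPO. Then for every linear order $L$ on $A$ (in particular for every voter's preference order) there is a unique favourite committee of $L$ in the range of $F$.
   Context: A profile assigns to each voter $i\in V$ a linear order $P_i$ on $A$; $P_i'P_{-i}$ replaces voter $i$'s order by $P_i'$. $S_2(A)$ is the set of 2-element subsets of $A$; a consular election rule is a map $F:\mathcal{P}(V,A)\to S_2(A)$. SPO: for all $P$, $i$, $P_i'$, $\mathrm{best}(P_i,F(P))\succeq_i\mathrm{best}(P_i,F(P_i'P_{-i}))$; SPP: same with $\mathrm{worst}$, where $\mathrm{best}(P_i,W)$, $\mathrm{worst}(P_i,W)$ are the $P_i$-best and $P_i$-worst elements of $W$. For a linear order $L$ on $A$ and $X,Y\in S_2(A)$: $X\succeq^O Y$ iff the $L$-best element of $X$ is weakly $L$-above that of $Y$; $X\succeq^P Y$ iff the $L$-worst element of $X$ is weakly $L$-above that of $Y$. A favourite committee of $L$ in $\mathcal{X}\subseteq S_2(A)$ is an element of $\mathcal{X}$ maximal in $\mathcal{X}$ under both $\succeq^O$ and $\succeq^P$. *)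

(* Defs.v *)
From mathcomp Require Import all_boot.
Set Implicit Arguments. Unset Strict Implicit. Unset Printing Implicit Defensive.

(* A linear order on A: [L x y] means "x is weakly L-above y". *)
Record lorder (A : finType) := LOrder {
  lrel :> rel A;
  lorder_refl : reflexive lrel;
  lorder_anti : antisymmetric lrel;
  lorder_trans : transitive lrel;
  lorder_total : total lrel }.

Definition upd (V : finType) (A : finType) (P : V -> lorder A) (i : V)
  (P' : lorder A) : V -> lorder A := fun j => if j == i then P' else P j.

Definition is_best (A : finType) (L : lorder A) (W : {set A}) (x : A) : Prop :=
  x \in W /\ forall y, y \in W -> L x y.
Definition is_worst (A : finType) (L : lorder A) (W : {set A}) (x : A) : Prop :=
  x \in W /\ forall y, y \in W -> L y x.

Definition consular (V A : finType) (F : (V -> lorder A) -> {set A}) : Prop :=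
  forall P, #|F P| = 2.

Definition SPO (V A : finType) (F : (V -> lorder A) -> {set A}) : Prop :=
  forall (P : V -> lorder A) (i : V) (P' : lorder A) (b b' : A),
    is_best (P i) (F P) b -> is_best (P i) (F (upd P i P')) b' -> P i b b'.

Definition SPP (V A : finType) (F : (V -> lorder A) -> {set A}) : Prop :=
  forall (P : V -> lorder A) (i : V) (P' : lorder A) (w w' : A),
    is_worst (P i) (F P) w -> is_worst (P i) (F (upd P i P')) w' -> P i w w'.

Definition geO (A : finType) (L : lorder A) (X Y : {set A}) : Prop :=
  forall x y, is_best L X x -> is_best L Y y -> L x y.
Definition geP (A : finType) (L : lorder A) (X Y : {set A}) : Prop :=
  forall x y, is_worst L X x -> is_worst L Y y -> L x y.

Definition favourite (A : finType) (L : lorder A) (S : {set A} -> Prop)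
  (X : {set A}) : Prop :=
  S X /\ forall Y, S Y -> (geO L Y X -> geO L X Y) /\ (geP L Y X -> geP L X Y).

Definition in_range (V A : finType) (F : (V -> lorder A) -> {set A})
  (X : {set A}) : Prop := exists P, F P = X.

(* Main.v *)
From Stdlib Require Import FunctionalExtensionality.
Require Import Defs.
From mathcomp Require Import all_boot.

Lemma ext_list (T : eqType) (r : rel T) : reflexive r -> transitive r -> total r ->
  forall (s : seq T) x0, x0 \in s -> exists2 x, x \in s & forall y, y \in s -> r x y.
Proof.
move=> hr ht htot; elim=> [//|a s IH] x0 _.
case: s IH => [|b s] IH.
  by exists a; rewrite ?inE // => y; rewrite inE => /eqP->.
have [x xin xm] := IH b (mem_head _ _).
case/orP: (htot a x) => hax.
  exists a; first exact: mem_head.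
  move=> y; rewrite inE => /orP[/eqP->|/xm]; first exact: hr.
  exact: ht.
exists x; first by rewrite inE xin orbT.
move=> y; rewrite inE => /orP[/eqP->|/xm] //.
Qed.

Lemma best_ex (A : finType) (L : lorder A) (W : {set A}) :
  #|W| = 2 -> exists x, is_best L W x.
Proof.
move=> hc; have: W != set0 by rewrite -card_gt0 hc.
case/set0Pn => x0 hx0.
have [|x xin xm] := @ext_list A L (@lorder_refl _ L) (@lorder_trans _ L)
   (@lorder_total _ L) (enum W) x0; first by rewrite mem_enum.
by exists x; split; [rewrite -mem_enum | move=> y hy; apply: xm; rewrite mem_enum].
Qed.

Lemma worst_ex (A : finType) (L : lorder A) (W : {set A}) :
  #|W| = 2 -> exists x, is_worst L W x.
Proof.
move=> hc; have: W != set0 by rewrite -card_gt0 hc.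
case/set0Pn => x0 hx0.
have hr : reflexive (fun x y => L y x) by move=> x; apply: lorder_refl.
have ht : transitive (fun x y => L y x).
  by move=> y x z /= h1 h2; apply: lorder_trans h2 h1.
have htot : total (fun x y => L y x) by move=> x y /=; rewrite orbC; apply: lorder_total.
have [|x xin xm] := @ext_list A (fun x y => L y x) hr ht htot (enum W) x0;
  first by rewrite mem_enum.
by exists x; split; [rewrite -mem_enum | move=> y hy; apply: xm; rewrite mem_enum].
Qed.

Lemma geO_refl (A : finType) (L : lorder A) (X : {set A}) : geO L X X.
Proof. by move=> x y [_ h] [hy _]; apply: h. Qed.
Lemma geP_refl (A : finType) (L : lorder A) (X : {set A}) : geP L X X.
Proof. by move=> x y [hx _] [_ h]; apply: h. Qed.

Lemma geO_trans (A : finType) (L : lorder A) (X Y Z : {set A}) : #|Y| = 2 ->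
  geO L X Y -> geO L Y Z -> geO L X Z.
Proof.
move=> hc h1 h2 x z bx bz; have [y by_] := @best_ex _ L _ hc.
exact: lorder_trans (h1 _ _ bx by_) (h2 _ _ by_ bz).
Qed.
Lemma geP_trans (A : finType) (L : lorder A) (X Y Z : {set A}) : #|Y| = 2 ->
  geP L X Y -> geP L Y Z -> geP L X Z.
Proof.
move=> hc h1 h2 x z bx bz; have [y by_] := @worst_ex _ L _ hc.
exact: lorder_trans (h1 _ _ bx by_) (h2 _ _ by_ bz).
Qed.

Lemma main_chain (V A : finType) (F : (V -> lorder A) -> {set A}) (L : lorder A) :
  consular F -> SPP F -> SPO F -> forall (s : seq V) P,
  geO L (F (fun j => if j \in s then L else P j)) (F P) /\
  geP L (F (fun j => if j \in s then L else P j)) (F P).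
Proof.
move=> hc hpp hpo; elim=> [|a s IH] P; first by split; [apply: geO_refl|apply: geP_refl].
have -> : (fun j => if j \in a :: s then L else P j) =
          (fun j => if j \in s then L else upd P a L j).
  apply: functional_extensionality => j; rewrite inE /upd.
  by case: (j == a); case: (j \in s).
have [h1 h2] := IH (upd P a L).
have hP : upd (upd P a L) a (P a) = P.
  apply: functional_extensionality => j; rewrite /upd.
  by case: eqP => [->|].
have hL : upd P a L a = L by rewrite /upd eqxx.
split.
  apply: geO_trans (hc _) h1 _ => x y bx by_.
  have := hpo (upd P a L) a (P a) x y; rewrite hP hL; apply => //.
apply: geP_trans (hc _) h2 _ => x y bx by_.
have := hpp (upd P a L) a (P a) x y; rewrite hP hL; apply => //.
Qed.

Lemma set_of_bw (A : finType) {L : lorder A} {X : {set A}} {b w : A} :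
  #|X| = 2 -> is_best L X b -> is_worst L X w -> X = [set b; w].
Proof.
move=> hc [bX hb] [wX hw].
have nbw : b != w.
  apply/eqP=> ebw; move: hc; subst w.
  have : X \subset [set b].
    apply/subsetP=> y hy; rewrite inE; apply/eqP.
    by apply: lorder_anti; apply/andP; split; [apply: hw|apply: hb].
  by move/subset_leq_card; rewrite cards1 => h e; rewrite e in h.
apply/eqP; rewrite eq_sym eqEcard cards2 nbw hc leqnn andbT.
by apply/subsetP=> y; rewrite !inE => /orP[/eqP->|/eqP->].
Qed.

Theorem corollary36 (V A : finType) (F : (V -> lorder A) -> {set A}) :
  0 < #|V| -> consular F -> SPP F -> SPO F ->
  forall L : lorder A, exists! X : {set A}, favourite L (in_range F) X.
Proof.
move=> _ hc hpp hpo L.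
set X0 := F (fun _ => L).
have key : forall P, geO L X0 (F P) /\ geP L X0 (F P).
  move=> P; have := @main_chain _ _ _ L hc hpp hpo (enum V) P.
  have -> // : (fun j => if j \in enum V then L else P j) = (fun _ => L).
  by apply: functional_extensionality => j; rewrite mem_enum.
have [b0 hb0] := @best_ex _ L _ (hc (fun _ => L)).
have [w0 hw0] := @worst_ex _ L _ (hc (fun _ => L)).
exists X0; split.
  split; first by exists (fun _ => L).
  move=> Y [P <-]; have [k1 k2] := key P; by split.
move=> X [[P eP] hX]; subst X.
have [k1 k2] := key P.
have [o1 o2] := hX X0 (ex_intro _ (fun _ => L) erefl).
have g1 := o1 k1; have g2 := o2 k2.
have [b hb] := @best_ex _ L _ (hc P); have [w hw] := @worst_ex _ L _ (hc P).
have eb : b = b0 by apply: lorder_anti; apply/andP; split; [exact: g1 | exact: k1].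
have ew : w = w0 by apply: lorder_anti; apply/andP; split; [exact: g2 | exact: k2].
rewrite /X0 (@set_of_bw A L _ _ _ (hc P) hb hw) (@set_of_bw A L _ _ _ (hc (fun _ => L)) hb0 hw0) eb ew //.
Qed.
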